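(* Let $G$ be a connected graph and $K\subseteq V(G)$ a nonempty set of vertices inducing a clique in $G$. Let $G_K$ be obtained from $G$ by adding a new vertex $x$ with $N_{G_K}(x)=K$. For each search tree $T$ on $G$ let $P^x(T)=\{T(i,x,v_{\lambda(T)}) \mid i\in\{0,\ldots,\lambda(T)+1\}\}$. Then $\{P^x(T)\mid T\in V(\mathcal{R}(G))\}$ is a partition of $V(\mathcal{R}(G_K))$.
   Context: For a connected graph $G$, a search tree on $G$ is a rooted tree with vertex set $V(G)$ defined recursively: its root is some vertex $r\in V(G)$, and the children of $r$ are the roots of search trees on the connected components of $G-r$. The rotation graph $\mathcal{R}(G)$ has the search trees on $G$ as vertices (adjacency given by rotations; only its vertex set matters here). For a rooted tree $T$ with root $r_T$ and $w\in V(T)$, $d_{T,w}$ is the distance from $r_T$ to $w$ in $T$. For a search tree $T$ on $G$, all vertices of the clique $K$ lie on a common root-to-leaf path; $\lambda(T)=\max\{d_{T,u}\mid u\in K\}$ and $v_{\lambda(T)}$ is the unique vertex of $K$ with $d_{T,v_{\lambda(T)}}=\lambda(T)$. Insertion: for a rooted tree $T$, a vertex $v\in V(T)$ with $d=d_{T,v}$, root-to-$v$ path $r_T=a_0,a_1,\ldots,a_d=v$, and a new vertex $x\notin V(T)$, the rooted tree $T(i,x,v)$ on $V(T)\cup\{x\}$ is: for $i=0$, $x$ is the new root with $T$ as its only subtree; for $1\le i\le d$, the edge $a_{i-1}a_i$ is subdivided by $x$ (root unchanged); for $i=d+1$, $x$ is added as a new leaf child of $v$. *)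

(* Defs.v *)
From mathcomp Require Import all_boot.
Set Implicit Arguments. Unset Strict Implicit. Unset Printing Implicit Defensive.

Section SearchTrees.
Variable V : finType.

(* A graph is an edge relation e : rel V (assumed symmetric, irreflexive).
   A rooted tree on V is encoded by its parent function p : V -> option V
   (p v = None iff v is the root). *)

Definition induced (e : rel V) (A : {set V}) : rel V :=
  [rel u v | [&& e u v, u \in A & v \in A]].

Definition comp (e : rel V) (A : {set V}) (u : V) : {set V} :=
  [set v in A | connect (induced e A) u v].

Inductive search_tree (e : rel V) : {set V} -> V -> (V -> option V) -> Prop :=
| ST_node (S : {set V}) (r : V) (p : V -> option V) :
    r \in S -> p r = None ->
    (forall u, u \in S :\ r ->
       exists rc (q : V -> option V),
         search_tree e (comp e (S :\ r) u) rc q /\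
         (forall v, v \in comp e (S :\ r) u ->
            p v = (if v == rc then Some r else q v))) ->
    search_tree e S r p.

(* search trees on G (= vertices of the rotation graph R(G)) *)
Definition is_search_tree (e : rel V) (p : {ffun V -> option V}) : Prop :=
  exists r, search_tree e [set: V] r p.

Definition iter_par (p : {ffun V -> option V}) (k : nat) (w : V) : option V :=
  iter k (obind p) (Some w).

(* d_{T,w}: distance from the root, i.e. the largest k such that the k-th
   ancestor of w exists *)
Definition depth (p : {ffun V -> option V}) (w : V) : nat :=
  \max_(k < #|V|.+1 | iter_par p k w != None) (k : nat).

Definition lam (K : {set V}) (p : {ffun V -> option V}) : nat :=
  \max_(u in K) depth p u.

(* Insertion T(i,x,v) of the new vertex x := None into the tree p, giving a
   rooted tree on option V. With d = d_{T,v} and a_j = the (d-j)-th ancestor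
   of v (the vertex at depth j on the root-to-v path):
   i = 0: x is the new root, old root becomes child of x;
   1 <= i <= d: x subdivides the edge a_{i-1} a_i;
   i = d+1: x is a new leaf child of v. *)
Definition insert (p : {ffun V -> option V}) (i : nat) (v : V)
  : {ffun option V -> option (option V)} :=
  let d := depth p v in
  [ffun y => match y with
    | None => if i is i'.+1 then omap Some (iter_par p (d - i') v) else None
    | Some w => if (i <= d) && (Some w == iter_par p (d - i) v)
                then Some None else omap Some (p w)
    end].

Definition addvx (e : rel V) (K : {set V}) : rel (option V) :=
  fun a b => match a, b with
  | Some u, Some v => e u v
  | Some u, None => u \in K
  | None, Some v => v \in K
  | None, None => false
  end.

(* membership of T' in P^x(T): T' = T(i,x,v_lambda) for some i in 0..lambda+1;
   v_lambda is the (unique) vertex of K at depth lambda(T). *)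
Definition Px (K : {set V}) (p : {ffun V -> option V})
  (q : {ffun option V -> option (option V)}) : Prop :=
  exists v i, [/\ v \in K, depth p v = lam K p, i <= (lam K p).+1
              & q = insert p i v].

End SearchTrees.

(* Main.v *)
Require Import Defs.
From mathcomp Require Import all_boot.
Set Implicit Arguments. Unset Strict Implicit. Unset Printing Implicit Defensive.
Local Notation comp := Defs.comp.

Section Generic.
Variable T : finType.

Definition iterf (p : T -> option T) k w := iter k (obind p) (Some w).
Definition anc (p : T -> option T) a w := exists j, iterf p j w = Some a.

Lemma iter_None (p : T -> option T) j : iter j (obind p) None = None.
Proof. by elim: j => //= j ->. Qed.

Lemma iterfD p j k w : iterf p (j + k) w = obind (iterf p j) (iterf p k w).
Proof.
rewrite /iterf iterD; case: (iter k (obind p) (Some w)) => //=.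
exact: iter_None.
Qed.

Lemma iterfS p k w : iterf p k.+1 w = obind p (iterf p k w).
Proof. by []. Qed.

Lemma iterf_after p k0 v r m : iterf p k0 v = Some r -> p r = None ->
  iterf p (m.+1 + k0) v = None.
Proof.
move=> H pr; rewrite iterfD H; change (iterf p m.+1 r = None).
rewrite /iterf iterSr /= pr; exact: iter_None.
Qed.

Lemma anc_refl p a : anc p a a.
Proof. by exists 0. Qed.

Lemma anc_trans p a b c : anc p a b -> anc p b c -> anc p a c.
Proof.
move=> [j Hj] [k Hk]; exists (j + k); by rewrite iterfD Hk /=.
Qed.

Lemma connect_ind (g : rel T) (P : T -> Prop) x :
  P x -> (forall y z, P y -> g y z -> P z) -> forall y, connect g x y -> P y.
Proof.
move=> Px H y /connectP [s ps ->]; elim: s x Px ps => [|z s IH] x Px //=.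
case/andP=> gxz ps; exact: IH (H _ _ Px gxz) ps.
Qed.

Variable f : rel T.
Hypothesis fsym : symmetric f.

Definition connected (X : {set T}) :=
  forall y z, y \in X -> z \in X -> connect (induced f X) y z.

Lemma induced_sym (X : {set T}) : symmetric (induced f X).
Proof. by move=> x y; rewrite /induced /= fsym; case: (x \in X); case: (y \in X); rewrite ?andbF. Qed.

Lemma induced_connect_sym (X : {set T}) x y :
  connect (induced f X) x y = connect (induced f X) y x.
Proof. exact/sym_connect_sym/induced_sym. Qed.

Lemma comp_sub (X : {set T}) x y : y \in comp f X x -> y \in X.
Proof. by rewrite inE => /andP[]. Qed.

Lemma comp_self (X : {set T}) x : x \in X -> x \in comp f X x.
Proof. by move=> xX; rewrite inE xX connect0. Qed.

Lemma comp_memx (X : {set T}) x y : y \in comp f X x -> x \in X.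
Proof.
rewrite inE => /andP[yX].
have: forall z, connect (induced f X) x z -> z = x \/ x \in X.
  apply: connect_ind; first by left.
  by move=> a b [-> | ->] //; rewrite /induced /= => /and3P[]; right.
by move=> H /H [<-|].
Qed.

Lemma comp_trans (X : {set T}) x y : y \in comp f X x -> comp f X y = comp f X x.
Proof.
rewrite inE => /andP[yX cxy]; apply/setP => z; rewrite !inE.
case: (z \in X) => //=; apply/idP/idP => H.
  exact: connect_trans cxy H.
by apply: connect_trans H; rewrite induced_connect_sym.
Qed.

Lemma comp_edge (X : {set T}) x y z : y \in comp f X x -> z \in (X : {set T}) -> f y z ->
  z \in comp f X x.
Proof.
move=> yC zX fyz; move: (yC); rewrite !inE zX => /andP[yX cxy] /=.
by apply: connect_trans cxy (connect1 _); rewrite /induced /= fyz yX zX.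
Qed.

Lemma comp_conn (X : {set T}) x : connected (comp f X x).
Proof.
move=> y z yC zC.
have xX := comp_memx yC.
have H : forall w, w \in comp f X x -> connect (induced f (comp f X x)) x w.
  have: forall w, connect (induced f X) x w ->
     w \in comp f X x /\ connect (induced f (comp f X x)) x w.
    apply: connect_ind; first by rewrite comp_self // connect0.
    move=> a b [aC ca]; rewrite /induced /= => /and3P[fab aX bX].
    have bC := comp_edge aC bX fab.
    split=> //; apply: connect_trans ca (connect1 _).
    by rewrite /induced /= fab aC bC.
  by move=> H w; rewrite inE => /andP[_ /H []].
apply: connect_trans (H z zC); by rewrite induced_connect_sym H.
Qed.

Lemma connected_comp (X : {set T}) x : connected X -> x \in X -> comp f X x = X.
Proof.
move=> cX xX; apply/setP => y; rewrite inE.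
by case yX: (y \in X) => //=; exact: cX.
Qed.

Lemma comp_card (S : {set T}) r u : r \in S -> #|comp f (S :\ r) u| < #|S|.
Proof.
move=> rS; rewrite (cardsD1 r S) rS add1n ltnS; apply: subset_leq_card.
by apply/subsetP => y /comp_sub.
Qed.

Lemma st_root S r p : search_tree f S r p -> r \in S.
Proof. by case. Qed.

Lemma st_rootN S r p : search_tree f S r p -> p r = None.
Proof. by case. Qed.

Lemma st_ext S r p p' : search_tree f S r p -> {in S, p =1 p'} ->
  search_tree f S r p'.
Proof.
case=> {}S {}r {}p rS pr H E; constructor => //; first by rewrite -E.
move=> u uS; have [rc [q [st ag]]] := H u uS; exists rc, q; split=> // v vC.
rewrite -E; first exact: ag.
by move: (comp_sub vC); rewrite inE => /andP[].
Qed.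

Lemma descend (p q : T -> option T) r rc (C : {set T}) v k1 :
  {in C, forall w, p w = if w == rc then Some r else q w} -> rc \in C ->
  iterf q k1 v = Some rc ->
  (forall j, j < k1 -> exists2 w, iterf q j v = Some w & (w \in C) && (w != rc)) ->
  (forall j, j <= k1 -> iterf p j v = iterf q j v) /\ iterf p k1.+1 v = Some r.
Proof.
move=> ag rcC Hk Hj.
have E : forall j, j <= k1 -> iterf p j v = iterf q j v.
  elim=> // j IH jk; rewrite !iterfS IH ?(ltnW jk) //.
  have [w -> /andP[wC wrc]] := Hj j jk; by rewrite /= ag // (negbTE wrc).
split=> //; by rewrite iterfS E // Hk /= ag // eqxx.
Qed.

Lemma st_chain n (S : {set T}) r p : #|S| <= n -> search_tree f S r p ->
  forall v, v \in S -> exists k0, [/\ k0 < #|S|, iterf p k0 v = Some r &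
    forall j, j < k0 -> exists2 w, iterf p j v = Some w & (w \in S) && (w != r)].
Proof.
elim: n S r p => [|n IHn] S r p cS st v vS.
  by move: cS; rewrite leqn0 => /eqP/card0_eq/(_ v); rewrite vS.
move: cS vS; case: st => {}S {}r {}p rS pr H cS vS.
case: (eqVneq v r) => [->|vr].
  by exists 0; split => //; apply/card_gt0P; exists r.
have vS' : v \in S :\ r by rewrite in_setD1 vr.
have [rc [q [st ag]]] := H v vS'.
have cC := comp_card v rS.
have [k1 [k1C Hk1 Hj]] := IHn _ _ _ (leq_trans (ltnSE (leq_trans cC cS)) (leqnn n)) st v (comp_self vS').
have [E Hr] := descend ag (st_root st) Hk1 Hj.
exists k1.+1; split => //; first exact: leq_ltn_trans k1C cC.
move=> j; rewrite ltnS leq_eqVlt => /orP[/eqP->|jk].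
  exists rc; first by rewrite E.
  by move: (comp_sub (st_root st)); rewrite in_setD1 => /andP[-> ->].
have [w Hw /andP[wC _]] := Hj j jk; exists w; first by rewrite E // ltnW.
by move: (comp_sub wC); rewrite in_setD1 => /andP[-> ->].
Qed.

Lemma chain_after p r v k0 j : iterf p k0 v = Some r -> p r = None -> k0 < j ->
  iterf p j v = None.
Proof.
move=> H pr kj; have := iterf_after (j - k0.+1) H pr.
by rewrite addSnnS subnK.
Qed.

Lemma chain_unique p r v k0 k :
  iterf p k0 v = Some r -> p r = None ->
  (forall j, j < k0 -> exists2 w, iterf p j v = Some w & (w \in [set: T]) && (w != r)) ->
  iterf p k v = Some r -> k = k0.
Proof.
move=> H pr Hj Hk; case: (ltngtP k k0) => // [kk|kk].
  by have [w] := Hj k kk; rewrite Hk => -[<-]; rewrite eqxx andbF.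
by rewrite (chain_after H pr kk) in Hk.
Qed.

Lemma st_anc_root (S : {set T}) r p v : search_tree f S r p -> v \in S -> anc p r v.
Proof.
move=> st vS; have [k0 [_ H _]] := st_chain (leqnn #|S|) st vS; by exists k0.
Qed.

Lemma st_parent (S : {set T}) r p y : search_tree f S r p -> y \in S ->
  p y = None \/ exists2 z, p y = Some z & z \in S.
Proof.
move=> st yS; have [[|[|k]] [_ H Hj]] := st_chain (leqnn #|S|) st yS.
- by move: H => [->]; left; exact: st_rootN st.
- by right; exists r => //; exact: st_root st.
- by have [w Hw /andP[wS _]] := Hj 1 isT; right; exists w.
Qed.

Section Sub.
Variables (p q : T -> option T) (r rc : T) (C : {set T}).
Hypothesis st : search_tree f C rc q.
Hypothesis ag : {in C, forall w, p w = if w == rc then Some r else q w}.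

Lemma anc_up a v : v \in C -> anc q a v -> anc p a v.
Proof.
move=> vC [j Hj].
have [k1 [_ Hk Hjs]] := st_chain (leqnn #|C|) st vC.
have [E _] := descend ag (st_root st) Hk Hjs.
case: (leqP j k1) => jk; first by exists j; rewrite E.
by rewrite (chain_after Hk (st_rootN st) jk) in Hj.
Qed.

Lemma anc_down a v : p r = None -> a != r -> v \in C -> anc p a v -> anc q a v.
Proof.
move=> pr ar vC [j Hj].
have [k1 [_ Hk Hjs]] := st_chain (leqnn #|C|) st vC.
have [E Hr] := descend ag (st_root st) Hk Hjs.
case: (leqP j k1) => jk; first by exists j; rewrite -E.
move: jk; rewrite leq_eqVlt => /orP[/eqP jk|jk].
  by move: Hj; rewrite -jk Hr => -[/eqP]; rewrite eq_sym (negbTE ar).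
by rewrite (chain_after Hr pr jk) in Hj.
Qed.
End Sub.

Lemma st_comparable n (S : {set T}) r p y z : #|S| <= n -> search_tree f S r p ->
  y \in S -> z \in S -> f y z -> anc p y z \/ anc p z y.
Proof.
elim: n S r p y z => [|n IHn] S r p y z cS st yS zS fyz.
  by move: cS; rewrite leqn0 => /eqP/card0_eq/(_ y); rewrite yS.
case: (eqVneq y r) => [->|yr]; first by left; exact: st_anc_root st zS.
case: (eqVneq z r) => [->|zr]; first by right; exact: st_anc_root st yS.
move: cS yS zS yr zr; case: st => {}S {}r {}p rS pr H cS yS zS yr zr.
have yS' : y \in S :\ r by rewrite in_setD1 yr.
have zS' : z \in S :\ r by rewrite in_setD1 zr.
have [rc [q [st ag]]] := H y yS'.
have yC := comp_self yS'.
have zC := comp_edge yC zS' fyz.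
have cC := comp_card y rS.
have [h|h] := IHn _ _ _ _ _ (ltnSE (leq_trans cC cS)) st yC zC fyz.
  by left; exact: (@anc_up p q r rc _ st ag _ _ zC h).
by right; exact: (@anc_up p q r rc _ st ag _ _ yC h).
Qed.
End Generic.



Section Gen2.
Variables (T : finType) (f : rel T).
Implicit Types (S : {set T}).

Lemma eqSome (x y : T) : (Some x == Some y) = (x == y).
Proof. by apply/eqP/eqP => [[]|->]. Qed.

Lemma st_sub S r p : search_tree f S r p -> forall u, u \in S :\ r ->
  exists rc q, search_tree f (comp f (S :\ r) u) rc q /\
    (forall v, v \in comp f (S :\ r) u -> p v = if v == rc then Some r else q v).
Proof. by case. Qed.

Lemma anc_root_only (p : T -> option T) r a : p r = None -> anc p a r -> a = r.
Proof.
move=> pr [[|j]]; first by case.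
by rewrite -(addn0 j.+1) (@iterf_after _ p 0 r r j).
Qed.
Lemma dummy_x : True. Proof. by [].
Qed.

Lemma st_anc_mem S r p a v : search_tree f S r p -> v \in S -> anc p a v -> a \in S.
Proof.
move=> st vS [j Hj]; have [k0 [_ Hk Hjs]] := st_chain (leqnn #|S|) st vS.
case: (ltngtP j k0) => jk.
- by have [w] := Hjs j jk; rewrite Hj => -[<-] /andP[].
- by rewrite (chain_after Hk (st_rootN st) jk) in Hj.
- by move: Hj; rewrite jk Hk => -[<-]; exact: st_root st.
Qed.
End Gen2.

Section Spec.
Variables (V : finType) (e : rel V) (K : {set V}).
Hypothesis esym : symmetric e.
Hypothesis Kcl : forall u v, u \in K -> v \in K -> u != v -> e u v.
Local Notation G' := (addvx e K).
Implicit Types (A S : {set V}) (b : bool).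

Definition oset (b : bool) (A : {set V}) : {set option V} :=
  [set y | if y is Some w then w \in A else b].
Definition liftf (p : V -> option V) (y : option V) : option (option V) :=
  if y is Some w then omap Some (p w) else None.
Definition insA (p : V -> option V) a (y : option V) : option (option V) :=
  match y with None => omap Some (p a)
  | Some w => if w == a then Some None else omap Some (p w) end.
Definition insL (p : V -> option V) v (y : option V) : option (option V) :=
  match y with None => Some (Some v) | Some w => omap Some (p w) end.
Definition remf (q : option V -> option (option V)) (w : V) : option V :=
  match q (Some w) with Some None => obind id (q None)
  | Some (Some u) => Some u | None => None end.

Lemma in_osetS b A w : (Some w \in oset b A) = (w \in A).
Proof. by rewrite inE. Qed.
Lemma in_osetN b A : (None \in oset b A) = b.
Proof. by rewrite inE. Qed.
Lemma osetD1S b A r : oset b A :\ Some r = oset b (A :\ r).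
Proof. by apply/setP => -[w|]; rewrite !inE. Qed.
Lemma osetD1N A : oset true A :\ None = oset false A.
Proof. by apply/setP => -[w|]; rewrite !inE. Qed.
Lemma osetT : [set: option V] = oset true [set: V].
Proof. by apply/setP => -[w|]; rewrite !inE. Qed.

Lemma remfE q w : q (Some w) != Some None -> q (Some w) = omap Some (remf q w).
Proof. by rewrite /remf; case: (q (Some w)) => [[x|]|]. Qed.
Lemma remf_omap q w x : q (Some w) = omap Some x -> remf q w = x.
Proof. by rewrite /remf => ->; case: x. Qed.
Lemma remf_eq q1 q2 w : q1 (Some w) = q2 (Some w) -> q1 (Some w) != Some None ->
  remf q1 w = remf q2 w.
Proof. by rewrite /remf => ->; case: (q2 (Some w)) => [[x|]|]. Qed.

Lemma addvx_sym : symmetric G'.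
Proof. by move=> [x|] [y|] //=; rewrite esym. Qed.

Lemma connect_oset b A u w : connect (induced e A) u w ->
  connect (induced G' (oset b A)) (Some u) (Some w).
Proof.
move: w; apply: (@connect_ind _ _ (fun w => connect _ (Some u) (Some w))).
  exact: connect0.
move=> y z H; rewrite /induced /= => /and3P[eyz yA zA].
by apply: connect_trans H (connect1 _); rewrite /induced /= !in_osetS eyz yA zA.
Qed.

Lemma clique_comp A x k1 k2 : k1 \in K -> k2 \in K -> k1 \in comp e A x ->
  k2 \in A -> k2 \in comp e A x.
Proof.
move=> k1K k2K k1C k2A; case: (eqVneq k1 k2) => [<- //|ne].
exact: comp_edge k1C k2A (Kcl k1K k2K ne).
Qed.

Lemma comp_oset_Some b A u : u \in A ->
  comp G' (oset b A) (Some u) =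
  oset (b && [exists k, (k \in K) && (k \in comp e A u)]) (comp e A u).
Proof.
move=> uA; apply/setP => y; apply/idP/idP.
- rewrite inE => /andP[_ cy]; move: y cy.
  apply: (@connect_ind _ _ (fun y => y \in oset _ _)).
    by rewrite in_osetS comp_self.
  move=> [y|] [z|] //; rewrite /induced /= ?in_osetS ?in_osetN.
  + by move=> yC /and3P[eyz _ zA]; exact: comp_edge yC zA eyz.
  + move=> yC /and3P[yK _ ->] /=; apply/existsP; exists y; by rewrite yK yC.
  + move=> /andP[_ /existsP[k /andP[kK kC]]] /and3P[zK _ zA].
    exact: clique_comp kK zK kC zA.
- case: y => [z|]; rewrite ?in_osetS ?in_osetN => H.
    rewrite inE in_osetS (comp_sub H) /=; apply: connect_oset.
    by move: H; rewrite inE => /andP[].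
  move: H => /andP[bt /existsP[k /andP[kK kC]]].
  rewrite inE in_osetN bt /=.
  apply: (@connect_trans _ _ (Some k)).
    by apply: connect_oset; move: kC; rewrite inE => /andP[_ ->].
  apply: connect1; rewrite /induced /= in_osetS in_osetN kK (comp_sub kC). by [].
Qed.

Lemma comp_oset_NoneK A k : k \in K -> k \in A ->
  comp G' (oset true A) None = comp G' (oset true A) (Some k).
Proof.
move=> kK kA; apply: (comp_trans addvx_sym).
apply: (comp_edge (y := Some k)); first by rewrite comp_self // in_osetS.
  by rewrite in_osetN.
by [].
Qed.

Lemma comp_oset_None0 A : (forall k, k \in K -> k \in A -> False) ->
  comp G' (oset true A) None = [set None].
Proof.
move=> H; apply/setP => y; rewrite /Defs.comp !inE; case: y => [w|]; last first.
  by rewrite eqxx connect0.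
apply/negbTE/negP => /andP[_ c].
have: forall y, connect (induced G' (oset true A)) None y -> y = None.
  apply: connect_ind => // y [z|] // ->.
  by rewrite /induced /= in_osetN in_osetS => /and3P[zK _ zA]; case: (H z zK zA).
by move/(_ _ c).
Qed.

Lemma lift_st n S r p : #|S| <= n -> search_tree e S r p ->
  search_tree G' (oset false S) (Some r) (liftf p).
Proof.
elim: n S r p => [|n IHn] S r p cS st.
  case: st cS => {}S {}r {}p rS _ _.
  by rewrite leqn0 => /eqP/card0_eq/(_ r); rewrite rS.
move: cS; case: st => {}S {}r {}p rS pr H cS.
constructor; first by rewrite in_osetS.
  by rewrite /= pr.
move=> [u|]; rewrite osetD1S ?in_osetN // in_osetS => uS.
have [rc [q [st ag]]] := H u uS.
exists (Some rc), (liftf q); rewrite comp_oset_Some //=; split.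
  exact: IHn _ _ _ (ltnSE (leq_trans (comp_card e u rS) cS)) st.
move=> [w|]; rewrite ?in_osetN // in_osetS => wC /=.
rewrite ag //; case: (eqVneq w rc) => [->|ne]; first by rewrite !eqxx.
have ne2 : Some w != Some rc by rewrite inj_eq //; exact: Some_inj.
by rewrite (negbTE ne2).
Qed.


Lemma st_insA n S r p : #|S| <= n -> search_tree e S r p -> connected e S ->
  forall a v, a \in S -> v \in K -> v \in S -> anc p a v ->
  search_tree G' (oset true S) (if a == r then None else Some r) (insA p a).
Proof.
elim: n S r p => [|n IHn] S r p cS st cnS a v aS vK vS av.
  by move: cS; rewrite leqn0 => /eqP/card0_eq/(_ a); rewrite aS.
have pr := st_rootN st; have rS := st_root st.
case: (eqVneq a r) => [ar|ar].
  subst a; constructor; first by rewrite in_osetN.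
    by rewrite /= pr.
  move=> [u|]; rewrite osetD1N ?in_osetN // in_osetS => uS.
  exists (Some r), (liftf p); rewrite comp_oset_Some //= (connected_comp cnS uS); split.
    exact: lift_st (leqnn _) st.
  move=> [w|]; rewrite ?in_osetN // in_osetS => wS /=.
have vr : v != r.
  by apply/eqP => vr; subst v; move: ar; rewrite (anc_root_only pr av) eqxx.
have vS' : v \in S :\ r by rewrite in_setD1 vr.
have [rc [q [stq ag]]] := st_sub st vS'.
have cC := comp_card e v rS.
have aq : anc q a v := anc_down stq ag pr ar (comp_self e vS') av.
have aC : a \in comp e (S :\ r) v := st_anc_mem stq (comp_self e vS') aq.
have IH := IHn _ _ _ (ltnSE (leq_trans cC cS)) stq (comp_conn esym (X:=S :\ r) (x:=v)) a v aC vK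
  (comp_self e vS') aq.
have claim : forall Y, Y = oset true (comp e (S :\ r) v) -> exists rc' q',
    search_tree G' Y rc' q' /\
    (forall y, y \in Y -> insA p a y = if y == rc' then Some (Some r) else q' y).
  move=> Y ->; exists (if a == rc then None else Some rc), (insA q a); split => //.
  move=> [w|]; rewrite ?in_osetS ?in_osetN => // wC /=.
    rewrite ag //.
    have [arc|arc] := eqVneq a rc.
      by subst rc; case: (w == a).
    rewrite eqSome; case: (eqVneq w rc) => [->|wrc].
      by rewrite eq_sym (negbTE arc).
    by [].
  have [arc|arc] := eqVneq a rc; first by subst rc; rewrite /= ag ?eqxx.
  by rewrite ag // (negbTE arc).
constructor; first by rewrite in_osetS.
  by rewrite /= eq_sym (negbTE ar) pr.
have exv : [exists k, (k \in K) && (k \in comp e (S :\ r) v)].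
  by apply/existsP; exists v; rewrite vK comp_self.
move=> [u|]; rewrite osetD1S => Hu; last first.
  by rewrite (comp_oset_NoneK vK vS') comp_oset_Some // exv; exact: claim.
move: Hu; rewrite in_osetS => uS; rewrite comp_oset_Some //.
case E: [exists k, (k \in K) && (k \in comp e (S :\ r) u)].
  move/existsP: E => [k /andP[kK kC]].
  have vCu := clique_comp kK vK kC vS'.
  by rewrite -(comp_trans esym vCu); exact: claim.
have [rc2 [q2 [st2 ag2]]] := st_sub st uS.
exists (Some rc2), (liftf q2); split.
  exact: lift_st (leqnn _) st2.
move=> [w|]; rewrite ?in_osetN // in_osetS => wC /=.
have wa : w != a.
  apply/eqP => wa; subst w; move/negbT/negP: E; apply; apply/existsP; exists v.
  by rewrite vK -(comp_trans esym wC) (comp_trans esym aC) comp_self.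
rewrite (negbTE wa) ag2 //.
case: (eqVneq w rc2) => [->|ne]; first by rewrite !eqxx.
by rewrite eqSome (negbTE ne).
Qed.

Lemma st_insL n S r p : #|S| <= n -> search_tree e S r p ->
  forall v, v \in K -> v \in S ->
  (forall k, k \in K -> k \in S -> anc p v k -> k = v) ->
  search_tree G' (oset true S) (Some r) (insL p v).
Proof.
elim: n S r p => [|n IHn] S r p cS st v vK vS Hv.
  by move: cS; rewrite leqn0 => /eqP/card0_eq/(_ v); rewrite vS.
have pr := st_rootN st; have rS := st_root st.
have CS : forall u w, w \in comp e (S :\ r) u -> w \in S.
  by move=> u w /comp_sub; rewrite in_setD1 => /andP[].
constructor; first by rewrite in_osetS.
  by rewrite /= pr.
have liftcase : forall u, u \in S :\ r ->
    exists rc' q', search_tree G' (oset false (comp e (S :\ r) u)) rc' q' /\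
    (forall y, y \in oset false (comp e (S :\ r) u) ->
       insL p v y = if y == rc' then Some (Some r) else q' y).
  move=> u uS; have [rc2 [q2 [st2 ag2]]] := st_sub st uS.
  exists (Some rc2), (liftf q2); split; first exact: lift_st (leqnn _) st2.
  move=> [w|]; rewrite ?in_osetN // in_osetS => wC /=.
  rewrite ag2 //; case: (eqVneq w rc2) => [->|ne]; first by rewrite !eqxx.
  by rewrite eqSome (negbTE ne).
case: (eqVneq v r) => [vr|vr].
  subst v.
  have noK : forall k, k \in K -> k \in S :\ r -> False.
    move=> k kK; rewrite in_setD1 => /andP[kr kS].
    by move: kr; rewrite (Hv k kK kS (st_anc_root st kS)) eqxx.
  move=> [u|]; rewrite osetD1S => Hu.
    move: Hu; rewrite in_osetS => uS; rewrite comp_oset_Some //.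
    have E : [exists k, (k \in K) && (k \in comp e (S :\ r) u)] = false.
      by apply/negbTE/existsP => -[k /andP[kK kC]]; exact: noK kK (comp_sub kC).
    rewrite E /=; exact: liftcase.
  rewrite comp_oset_None0 //.
  exists None, (fun _ => None); split.
    constructor; first by rewrite inE.
      by [].
    by move=> u; rewrite in_setD1 in_set1 => /andP[/negbTE ->].
  by move=> y; rewrite inE => /eqP ->.
have vS' : v \in S :\ r by rewrite in_setD1 vr.
have [rc [q [stq ag]]] := st_sub st vS'.
have cC := comp_card e v rS.
have IH := IHn _ _ _ (ltnSE (leq_trans cC cS)) stq v vK (comp_self e vS').
have IH2 : search_tree G' (oset true (comp e (S :\ r) v)) (Some rc) (insL q v).
  apply: IH => k kK kC akq; apply: Hv kK (CS _ _ kC) _.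
  exact: (anc_up stq ag kC akq).
have claim : forall Y, Y = oset true (comp e (S :\ r) v) -> exists rc' q',
    search_tree G' Y rc' q' /\
    (forall y, y \in Y -> insL p v y = if y == rc' then Some (Some r) else q' y).
  move=> Y ->; exists (Some rc), (insL q v); split => //.
  move=> [w|]; rewrite ?in_osetS ?in_osetN // => wC /=.
  by rewrite ag // eqSome; case: (w == rc).
have exv : [exists k, (k \in K) && (k \in comp e (S :\ r) v)].
  by apply/existsP; exists v; rewrite vK comp_self.
move=> [u|]; rewrite osetD1S => Hu; last first.
  by rewrite (comp_oset_NoneK vK vS') comp_oset_Some // exv; exact: claim.
move: Hu; rewrite in_osetS => uS; rewrite comp_oset_Some //.
case E: [exists k, (k \in K) && (k \in comp e (S :\ r) u)].
  move/existsP: E => [k /andP[kK kC]].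
  have vCu := clique_comp kK vK kC vS'.
  by rewrite -(comp_trans esym vCu); exact: claim.
exact: liftcase.
Qed.

Lemma parent_in (T : finType) (f : rel T) (Y : {set T}) r q y z :
  search_tree f Y r q -> y \in Y -> q y = Some z -> z \in Y.
Proof. by move=> st yY E; case: (st_parent st yY); rewrite E // => -[z' [->]]. Qed.

Lemma parent_notNone A r q y : search_tree G' (oset false A) r q ->
  y \in oset false A -> q y != Some None.
Proof.
move=> st yY; apply/negP => /eqP E.
by move: (parent_in st yY E); rewrite in_osetN.
Qed.

Lemma agree_rem q q' r rc' rc (Y : {set option V}) w :
  Some w \in Y ->
  (forall y, y \in Y -> q y = if y == rc' then Some (Some r) else q' y) ->
  (forall y z, y \in Y -> q' y = Some z -> z \in Y) ->
  (rc' = Some rc \/ (rc' = None /\ None \in Y /\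
     forall w, Some w \in Y -> (q' (Some w) == Some None) = (w == rc))) ->
  remf q w = if w == rc then Some r else remf q' w.
Proof.
move=> wY ag par [E|[E [NY Hrc]]]; subst rc'.
  have qw := ag _ wY; case: (eqVneq w rc) => [ewrc|ne].
    by subst w; rewrite eqxx in qw; rewrite /remf qw.
  rewrite eqSome (negbTE ne) in qw.
  rewrite /remf qw; case E: (q' (Some w)) => [[z|]|] //.
  by rewrite (ag None (par _ _ wY E)).
have qw := ag _ wY; have := Hrc w wY.
case: (eqVneq w rc) => [ewrc|ne] H.
  subst w; move/eqP: H => H; rewrite /= H in qw.
  by rewrite /remf qw (ag None NY).
apply: remf_eq; first by rewrite qw.
by rewrite qw /=; apply: negbT.
Qed.

Lemma conn_oset S : connected G' (oset true S) -> connected e S.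
Proof.
move=> cn u w uS wS.
have := cn _ _ (_ : Some u \in oset true S) (_ : Some w \in oset true S).
rewrite !in_osetS => /(_ uS wS).
suff: forall y, connect (induced G' (oset true S)) (Some u) y -> match y return Prop with
   | Some z => connect (induced e S) u z
   | None => forall k, k \in K -> k \in S -> connect (induced e S) u k end.
  by move=> H /H.
apply: connect_ind; first exact: connect0.
move=> [y|] [z|] //; rewrite /induced /= ?in_osetS ?in_osetN.
- move=> cy /and3P[eyz yS zS]; apply: connect_trans cy (connect1 _).
  by rewrite /induced /= eyz yS zS.
- move=> cy /and3P[yK yS _] k kK kS; case: (eqVneq y k) => [<- //|ne].
  apply: connect_trans cy (connect1 _).
  by rewrite /induced /= Kcl // yS kS.
- by move=> H /and3P[zK _ zS]; exact: H.
Qed.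

Lemma conn_rootK S r : connected G' (oset true S) -> r \in S ->
  (forall k, k \in K -> k \in S :\ r -> False) -> r \in K.
Proof.
move=> cn rS noK.
have := cn None (Some r); rewrite in_osetN in_osetS => /(_ isT rS).
suff: forall y, connect (induced G' (oset true S)) None y -> match y return Prop with
   | Some z => r \in K | None => True end.
  by move=> H /H.
apply: connect_ind => //.
move=> [y|] [z|] //; rewrite /induced /= ?in_osetS ?in_osetN.
move=> _ /and3P[zK _ zS]; case: (eqVneq z r) => [<- //|ne].
by case: (noK z zK); rewrite in_setD1 ne.
Qed.

Lemma st_rem n b S r' q : #|oset b S| <= n -> search_tree G' (oset b S) r' q ->
  connected G' (oset b S) -> (b -> exists2 k, k \in K & k \in S) ->
  exists r, search_tree e S r (remf q) /\
  (if b then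
    (exists a, [/\ a \in S, (exists2 k, (k \in K) && (k \in S) & anc (remf q) a k),
        r' = (if a == r then None else Some r) & {in oset true S, q =1 insA (remf q) a}])
    \/ (r' = Some r /\ exists v, [/\ v \in K, v \in S,
         (forall k, k \in K -> k \in S -> anc (remf q) v k -> k = v)
         & {in oset true S, q =1 insL (remf q) v}])
  else r' = Some r).
Proof.
elim: n b S r' q => [|n IHn] b S r' q cS st cn Kne.
  by move: cS; rewrite leqn0 => /eqP/card0_eq/(_ r'); rewrite (st_root st).
have r'S := st_root st; have qr := st_rootN st.
case: r' st r'S qr => [r|] st r'S qr; last first.
  have bt : b by rewrite in_osetN in r'S.
  move: cS st cn Kne r'S; rewrite bt => cS st cn Kne r'S.
  have [k0 k0K k0S] := Kne isT.
  have cnS := conn_oset cn.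
  have Hk0 : Some k0 \in oset true S :\ None by rewrite osetD1N in_osetS.
  have [rc' [q' [st' ag']]] := st_sub st Hk0.
  have cY := comp_card G' (Some k0) r'S.
  have cnY := comp_conn addvx_sym (X := oset true S :\ None) (x := Some k0).
  have EY : comp G' (oset true S :\ None) (Some k0) = oset false S.
    by rewrite osetD1N comp_oset_Some //= (connected_comp cnS k0S).
  rewrite EY in st' ag' cY cnY.
  have Kf : false -> exists2 k, k \in K & k \in S by [].
  have [rc [strc E]] := IHn false S rc' q' (ltnSE (leq_trans cY cS)) st' cnY Kf.
  subst rc'.
  have Erem : {in S, remf q =1 remf q'}.
    move=> w wS; have := ag' (Some w); rewrite in_osetS => /(_ wS) qw.
    case: (eqVneq w rc) => [ew|ne].
      subst w; rewrite eqxx in qw.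
      by rewrite /remf qw qr /= (st_rootN st').
    rewrite eqSome (negbTE ne) in qw.
    apply: remf_eq => //; rewrite qw; apply: parent_notNone st' _.
    by rewrite in_osetS.
  have stS : search_tree e S rc (remf q).
    apply: (st_ext strc) => w wS; by rewrite Erem.
  have remrc : remf q rc = None.
    by rewrite Erem ?(st_root strc) // /remf (st_rootN st').
  exists rc; split => //; left; exists rc; split.
  - exact: st_root strc.
  - by exists k0; [rewrite k0K k0S | exact: st_anc_root stS k0S].
  - by rewrite eqxx.
  - move=> [w|]; rewrite ?in_osetS ?in_osetN => // wS /=; last by rewrite qr remrc.
    rewrite ag' ?in_osetS // eqSome.
    case: (eqVneq w rc) => [ew|ne] /=; first by [].
    rewrite Erem //; apply: remfE; apply: parent_notNone st' _.
    by rewrite in_osetS.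
have rS : r \in S by rewrite in_osetS in r'S.
have Pr : remf q r = None by rewrite /remf qr.
have CS : forall u w, w \in comp e (S :\ r) u -> w \in S.
  by move=> u w /comp_sub; rewrite in_setD1 => /andP[].
have sub : forall u c, u \in S :\ r ->
    c = b && [exists k, (k \in K) && (k \in comp e (S :\ r) u)] ->
    exists rc' q', [/\ search_tree G' (oset c (comp e (S :\ r) u)) rc' q',
      (forall y, y \in oset c (comp e (S :\ r) u) ->
         q y = if y == rc' then Some (Some r) else q' y),
      #|oset c (comp e (S :\ r) u)| <= n,
      connected G' (oset c (comp e (S :\ r) u)) &
      (c -> exists2 k, k \in K & k \in comp e (S :\ r) u)].
  move=> u c uS ->.
  have Hu : Some u \in oset b S :\ Some r by rewrite osetD1S in_osetS.
  have [rc' [q' [st' ag']]] := st_sub st Hu.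
  have cY := comp_card G' (Some u) r'S.
  have cnY := comp_conn addvx_sym (X := oset b S :\ Some r) (x := Some u).
  rewrite osetD1S comp_oset_Some // in st' ag' cY cnY.
  exists rc', q'; split => //; first exact: ltnSE (leq_trans cY cS).
  by move=> /andP[_ /existsP[k /andP[kK kC]]]; exists k.
have nonK : forall w, w \in S :\ r ->
    [exists k, (k \in K) && (k \in comp e (S :\ r) w)] = false ->
    q (Some w) != Some None.
  move=> w wS E.
  have Ef : false = b && [exists k, (k \in K) && (k \in comp e (S :\ r) w)] by rewrite E andbF.
  have [rc' [q' [st' ag' _ _ _]]] := sub w false wS Ef.
  have wY : Some w \in oset false (comp e (S :\ r) w) by rewrite in_osetS comp_self.
  rewrite ag' //; case: ifP => _ //; exact: parent_notNone st' wY.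
have agrP : forall u c rc' q' rc, u \in S :\ r ->
    search_tree G' (oset c (comp e (S :\ r) u)) rc' q' ->
    (forall y, y \in oset c (comp e (S :\ r) u) ->
         q y = if y == rc' then Some (Some r) else q' y) ->
    (if c then
    (exists a, [/\ a \in comp e (S :\ r) u,
        (exists2 k, (k \in K) && (k \in comp e (S :\ r) u) & anc (remf q') a k),
        rc' = (if a == rc then None else Some rc) &
        {in oset true (comp e (S :\ r) u), q' =1 insA (remf q') a}])
    \/ (rc' = Some rc /\ exists v, [/\ v \in K, v \in comp e (S :\ r) u,
         (forall k, k \in K -> k \in comp e (S :\ r) u -> anc (remf q') v k -> k = v)
         & {in oset true (comp e (S :\ r) u), q' =1 insL (remf q') v}])
    else rc' = Some rc) ->
    forall w, w \in comp e (S :\ r) u ->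
      remf q w = if w == rc then Some r else remf q' w.
  move=> u c rc' q' rc uS st' ag' shp w wC.
  apply: (agree_rem (Y := oset c (comp e (S :\ r) u)) _ ag').
  - by rewrite in_osetS.
  - by move=> y z yY; exact: parent_in st' yY.
  case: c st' ag' shp => st' ag' shp; last by left.
  case: shp => [[a [_ _ E qA]]|[E _]]; last by left.
  move: E; case: (eqVneq a rc) => [arc|arc] E; last by left.
  right; split => //; split; first by rewrite in_osetN.
  move=> w' w'Y; rewrite qA // /insA; subst a; case: (w' == rc) => //.
  by case: (remf q' w').
have stP : search_tree e S r (remf q).
  constructor => // u uS.
  have [c Ec] : exists c, c = b && [exists k, (k \in K) && (k \in comp e (S :\ r) u)].
    by eexists.
  have [rc' [q' [st' ag' cY cnY Kc]]] := sub u c uS Ec.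
  have [rc [strc shp]] := IHn c _ rc' q' cY st' cnY Kc.
  exists rc, (remf q'); split => //.
  exact: agrP uS st' ag' shp.
exists r; split => //.
destruct b; last by [].
case EK: [exists k, (k \in K) && (k \in S :\ r)]; last first.
  have noK : forall k, k \in K -> k \in S :\ r -> False.
    by move=> k kK kS; move/negbT/existsP: EK; apply; exists k; rewrite kK kS.
  have rK := conn_rootK cn rS noK.
  have NY : None \in oset true S :\ Some r by rewrite osetD1S in_osetN.
  have [rc0 [q0 [st0 ag0]]] := st_sub st NY.
  rewrite osetD1S comp_oset_None0 // in st0 ag0.
  have rc0N : rc0 = None by move: (st_root st0); rewrite inE => /eqP.
  have qN : q None = Some (Some r) by rewrite ag0 ?inE // rc0N.
  right; split => //; exists r; split => //.
    move=> k kK kS _; case: (eqVneq k r) => // ne; case: (noK k kK).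
    by rewrite in_setD1 ne.
  move=> [w|]; rewrite ?in_osetS => // wS /=.
  case: (eqVneq w r) => [->|ne]; first by rewrite qr Pr.
  have wS' : w \in S :\ r by rewrite in_setD1 ne.
  apply: remfE; apply: nonK wS' _.
  apply/negbTE/existsP => -[k /andP[kK kC]]; exact: noK kK (comp_sub kC).
move/existsP: EK => [k /andP[kK kS']].
have Ec : true = true && [exists k', (k' \in K) && (k' \in comp e (S :\ r) k)].
  by symmetry; apply/existsP; exists k; rewrite kK comp_self.
have [rc' [q' [st' ag' cY cnY Kc]]] := sub k true kS' Ec.
have [rc [strc shp]] := IHn true _ rc' q' cY st' cnY Kc.
have agk := agrP _ _ _ _ _ kS' st' ag' shp.
have outside : forall w, w \in S :\ r -> w \notin comp e (S :\ r) k ->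
    q (Some w) != Some None.
  move=> w wS wn; have wS2 := wS; apply: nonK wS _; apply/negbTE/existsP => -[k' /andP[k'K k'C]].
  have kCw := clique_comp k'K kK k'C kS'.
  by apply/negP: wn; rewrite (comp_trans esym kCw) (comp_self e wS2).
have NY : None \in oset true (comp e (S :\ r) k) by rewrite in_osetN.
case: shp => [[a [aC [k' /andP[k'K k'C] ak'] E qA]]|[E [v [vK vC Hv qL]]]].
  have ar : a != r by move: (comp_sub aC); rewrite in_setD1 => /andP[].
  left; exists a; split.
  - exact: CS aC.
  - exists k'; first by rewrite k'K (CS _ _ k'C).
    exact: (@anc_up _ e (remf q) (remf q') r rc _ strc agk a k' k'C ak').
  - by rewrite (negbTE ar).
  - move=> [w|] wS; last first.
      rewrite ag' // E; case: (eqVneq a rc) => [arc|arc] /=.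
        by subst rc; rewrite agk // eqxx.
      by rewrite qA // /= agk // (negbTE arc).
    rewrite in_osetS in wS.
    case: (eqVneq w r) => [->|wr].
      by rewrite qr /= eq_sym (negbTE ar) Pr.
    have wS' : w \in S :\ r by rewrite in_setD1 wr.
    case: (eqVneq w a) => [->|wa].
      rewrite /= eqxx (ag' (Some a)) ?in_osetS // E.
      case: (eqVneq a rc) => [arc|arc] /=; first by rewrite qA ?in_osetS // /= eqxx.
      by rewrite eqSome (negbTE arc) qA ?in_osetS // /= eqxx.
    rewrite /= (negbTE wa); apply: remfE.
    case: (boolP (w \in comp e (S :\ r) k)) => wC; last exact: outside wS' wC.
    rewrite ag' ?in_osetS //; case: ifP => // _.
    rewrite qA ?in_osetS // /= (negbTE wa).
    by case: (remf q' w).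
have vr : v != r by move: (comp_sub vC); rewrite in_setD1 => /andP[].
right; split => //; exists v; split => //.
- exact: CS vC.
- move=> k2 k2K k2S av; case: (eqVneq k2 r) => [e2|ne].
    by subst k2; move: vr; rewrite (anc_root_only Pr av) eqxx.
  have k2S' : k2 \in S :\ r by rewrite in_setD1 ne.
  have k2C := clique_comp kK k2K (comp_self e kS') k2S'.
  exact: (Hv _ k2K k2C (@anc_down _ e (remf q) (remf q') r rc _ strc agk v k2 Pr vr k2C av)).
- move=> [w|] wS; last by rewrite ag' // E /= qL.
  rewrite in_osetS in wS.
  case: (eqVneq w r) => [->|wr]; first by rewrite qr /= Pr.
  have wS' : w \in S :\ r by rewrite in_setD1 wr.
  rewrite /=; apply: remfE.
  case: (boolP (w \in comp e (S :\ r) k)) => wC; last exact: outside wS' wC.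
  rewrite ag' ?in_osetS //; case: ifP => // _.
  rewrite qL ?in_osetS // /=.
  by case: (remf q' w).
Qed.

End Spec.


Section Depth.
Variables (V : finType) (e : rel V).
Implicit Types (p : {ffun V -> option V}).

Lemma iter_parE p k w : iter_par p k w = iterf p k w.
Proof. by []. Qed.

Lemma depth_chain p r w : search_tree e [set: V] r p ->
  exists k0, [/\ depth p w = k0, iterf p k0 w = Some r,
    (forall j, (iter_par p j w != None) = (j <= k0)) &
    (forall j, j < k0 -> exists2 w', iterf p j w = Some w' & (w' \in [set: V]) && (w' != r))].
Proof.
move=> st; have [k0 [k0lt Hk Hj]] := st_chain (leqnn _) st (in_setT w).
have pr := st_rootN st.
have E : forall j, (iter_par p j w != None) = (j <= k0).
  move=> j; rewrite iter_parE; case: (leqP j k0) => jk.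
    move: jk; rewrite leq_eqVlt => /orP[/eqP->|jk]; first by rewrite Hk.
    by have [w' ->] := Hj j jk.
  by rewrite (chain_after Hk pr jk).
exists k0; split => //.
apply/eqP; rewrite eqn_leq; apply/andP; split.
  by apply/bigmax_leqP => k; rewrite E.
have k0l : k0 < #|V|.+1 by rewrite cardsT in k0lt; exact: ltnW.
by apply: (leq_bigmax_cond (Ordinal k0l)); rewrite /= E.
Qed.

Lemma depth_unique p r w m : search_tree e [set: V] r p ->
  iterf p m w = Some r -> depth p w = m.
Proof.
move=> st Hm; have [k0 [-> Hk _ Hj]] := depth_chain w st.
by rewrite (chain_unique Hk (st_rootN st) Hj Hm).
Qed.

Lemma depth_desc p r k v j : search_tree e [set: V] r p ->
  iterf p j k = Some v -> depth p k = depth p v + j.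
Proof.
move=> st Hj; have [k0 [-> Hk _ _]] := depth_chain v st.
apply: depth_unique st _; by rewrite iterfD Hj.
Qed.

Lemma iterf_ext (p1 p2 : V -> option V) k w : p1 =1 p2 -> iterf p1 k w = iterf p2 k w.
Proof. move=> E; elim: k => //= k; rewrite /iterf /= => ->; by case: (iter k _ _). Qed.

Lemma anc_ext (p1 p2 : V -> option V) a w : p1 =1 p2 -> anc p1 a w -> anc p2 a w.
Proof. by move=> E [j Hj]; exists j; rewrite -(iterf_ext _ _ E). Qed.

Lemma insert_A p r v i : search_tree e [set: V] r p -> i <= depth p v ->
  exists2 a, iterf p (depth p v - i) v = Some a & forall y, insert p i v y = insA p a y.
Proof.
move=> st id; have [d [dE Hd E Hj]] := depth_chain v st.
have : iter_par p (depth p v - i) v != None by rewrite E dE leq_subr.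
rewrite iter_parE; case Ha: (iterf p (depth p v - i) v) => [a|] // _.
exists a => // -[w|]; rewrite /insert ffunE.
  by rewrite id /= iter_parE Ha eqSome.
case: i id Ha => [|i] id Ha /=.
  by move: Ha; rewrite subn0 dE Hd => -[<-]; rewrite (st_rootN st).
by rewrite iter_parE -(subnSK id) iterfS Ha.
Qed.

Lemma insert_L p v y : insert p (depth p v).+1 v y = insL p v y.
Proof.
rewrite /insert ffunE; case: y => [w|] /=; first by rewrite ltnn.
by rewrite subnn.
Qed.

Lemma remf_ext (q1 q2 : option V -> option (option V)) w : q1 =1 q2 -> remf q1 w = remf q2 w.
Proof. by move=> E; rewrite /remf !E. Qed.

Lemma remf_insA (p : V -> option V) a w : remf (insA p a) w = p w.
Proof.
rewrite /remf /insA; case: (eqVneq w a) => [->|ne] /=; first by case: (p a).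
by case: (p w).
Qed.

Lemma remf_insL (p : V -> option V) v w : remf (insL p v) w = p w.
Proof. by rewrite /remf /insL; case: (p w). Qed.

Lemma remf_insert p r v i w : search_tree e [set: V] r p -> i <= (depth p v).+1 ->
  remf (insert p i v) w = p w.
Proof.
move=> st; rewrite leq_eqVlt => /orP[/eqP->|id].
  by rewrite (remf_ext _ (insert_L p v)) remf_insL.
have [a _ E] := insert_A st (id : i <= depth p v).
by rewrite (remf_ext _ E) remf_insA.
Qed.
End Depth.


Unset Implicit Arguments.
Theorem proposition2p4 (V : finType) (e : rel V) (K : {set V}) :
  symmetric e -> irreflexive e ->
  (forall u v, connect e u v) ->
  K != set0 ->
  (forall u v, u \in K -> v \in K -> u != v -> e u v) ->
  [/\ (* every block is nonempty *)
      (forall T, is_search_tree e T -> exists T', Px K T T'),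
      (* every block consists of search trees on G_K *)
      (forall T T', is_search_tree e T -> Px K T T' ->
                    is_search_tree (addvx e K) T'),
      (* the blocks cover V(R(G_K)) *)
      (forall T', is_search_tree (addvx e K) T' ->
                  exists2 T, is_search_tree e T & Px K T T')
    & (* two blocks that meet are equal *)
      (forall T1 T2, is_search_tree e T1 -> is_search_tree e T2 ->
         (exists T', Px K T1 T' /\ Px K T2 T') ->
         forall T', Px K T1 T' <-> Px K T2 T')].
Proof.
move=> esym _ conn Kne Kcl.
have Kpos : 0 < #|K| by rewrite card_gt0.
have [k0 k0K] : exists k0, k0 \in K.
  by case/set0Pn: Kne => k kK; exists k.
have connT : connected e [set: V].
  move=> y z _ _; have := conn y z.
  suff: forall w, connect e y w -> connect (induced e [set: V]) y w by apply.
  apply: connect_ind; first exact: connect0.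
  move=> a b H eab; apply: connect_trans H (connect1 _).
  by rewrite /induced /= eab !in_setT.
have connG : connected (addvx e K) (oset true [set: V]).
  have toK : forall y, connect (induced (addvx e K) (oset true [set: V])) (Some k0) y.
    case=> [w|]; first by apply: connect_oset; exact: connT.
    by apply: connect1; rewrite /induced /= k0K !inE.
  move=> y z _ _; apply: connect_trans (toK z).
  by rewrite (induced_connect_sym (addvx_sym K esym)) toK.
have lamE : forall T v, v \in K -> depth T v <= lam K T.
  by move=> T v vK; apply: leq_bigmax_cond.
split.
- move=> T [r st]; have [v vK vmax] := eq_bigmax_cond (depth T) Kpos.
  by exists (insert T 0 v), v, 0; split.
- move=> T T' [r st] [v [i [vK dv il ->]]].
  case: (leqP i (depth T v)) => [id|di].
    have [a Ha E] := insert_A st id.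
    exists (if a == r then None else Some r).
    have av : anc T a v by exists (depth T v - i).
    have H := st_insA esym Kcl (leqnn _) st connT (in_setT a) vK (in_setT v) av.
    rewrite -osetT in H; apply: (st_ext H) => y _; by rewrite E.
  have -> : i = (depth T v).+1 by apply/eqP; rewrite eqn_leq di andbT dv.
  exists (Some r).
  suff H : search_tree (addvx e K) (oset true [set: V]) (Some r) (insL T v).
    rewrite -osetT in H; apply: (st_ext H) => y _; by rewrite insert_L.
  apply: (st_insL esym Kcl (leqnn _) st vK (in_setT v)).
  move=> k kK _ [j Hj]; have dk := depth_desc st Hj.
  have := lamE T k kK; rewrite dk -dv -{2}(addn0 (depth T v)) leq_add2l leqn0 => /eqP j0.
  by move: Hj; rewrite j0 => -[].
- move=> T' [r' st']; rewrite osetT in st'.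
  have [r [stP shp]] := st_rem esym Kcl (leqnn _) st' connG (fun _ => ex_intro2 _ _ k0 k0K (in_setT k0)).
  set T := [ffun w => remf T' w].
  have TE : forall w, T w = remf T' w by move=> w; rewrite ffunE.
  have stT : search_tree e [set: V] r T by apply: (st_ext stP) => w _; rewrite TE.
  exists T; first by exists r.
  have [v vK vmax] := eq_bigmax_cond (depth T) Kpos.
  have ancT : forall a w, anc (remf T') a w -> anc T a w.
    by move=> a w; apply: anc_ext => x; rewrite TE.
  have cmpK : forall k1 k2, k1 \in K -> k2 \in K -> k1 = k2 \/ anc T k1 k2 \/ anc T k2 k1.
    move=> k1 k2 k1K k2K; case: (eqVneq k1 k2) => [|ne]; first by left.
    right; exact: st_comparable (leqnn _) stT (in_setT _) (in_setT _) (Kcl _ _ k1K k2K ne).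
  case: shp => [[a [_ [k /andP[kK _] ak] _ qA]]|[_ [w [wK _ Hw qL]]]].
    have av : anc T a v.
      have akT := ancT _ _ ak.
      case: (cmpK k v kK vK) => [<- //|[kv|[j Hj]]]; first exact: anc_trans akT kv.
      have := lamE T k kK; rewrite (depth_desc stT Hj) /lam vmax.
      rewrite -{2}(addn0 (depth T v)) leq_add2l leqn0 => /eqP j0.
      by move: Hj; rewrite j0 => -[<-].
    case: av => j Hj.
    have dv := depth_desc stT Hj.
    exists v, (depth T a); split => //.
      by rewrite /lam vmax dv; apply/leqW/leq_addr.
    have ia : depth T a <= depth T v by rewrite dv leq_addr.
    have [a' Ha' E] := insert_A stT ia.
    move: Ha'; rewrite dv addnC addnK Hj => -[ea]; subst a'.
    apply/ffunP => y; rewrite E qA ?inE; last by case: y.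
    by case: y => [x|] /=; rewrite !TE.
  have dw : depth T w = lam K T.
    apply/eqP; rewrite eqn_leq lamE //=; apply/bigmax_leqP => k kK.
    case: (cmpK k w kK wK) => [-> //|[[j Hj]|kw]].
      by rewrite (depth_desc stT Hj) leq_addr.
    case: kw => j Hj.
    have -> : k = w by apply: Hw kK (in_setT k) _; exists j; rewrite -Hj; apply: iterf_ext => x; rewrite TE.
    by [].
  exists w, (depth T w).+1; split => //; first by rewrite dw.
  apply/ffunP => y; rewrite insert_L qL ?inE; last by case: y.
  by case: y => [x|] /=; rewrite ?TE.
- move=> T1 T2 [r1 st1] [r2 st2] [T' [[v1 [i1 [_ d1 i1l E1]]] [v2 [i2 [_ d2 i2l E2]]]]].
  have -> // : T1 = T2.
  apply/ffunP => w.
  rewrite -(remf_insert w st1 (_ : i1 <= (depth T1 v1).+1)); last by rewrite d1.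
  rewrite -(remf_insert w st2 (_ : i2 <= (depth T2 v2).+1)); last by rewrite d2.
  by apply: remf_ext => y; rewrite -E1 -E2.
Qed.
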